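(* Suppose $0<\delta < \frac{8}{5} g^{-k-3} k^{-2}$. Then for every $\vec \theta \in R_{\delta}^A$ we have $|\Phi(\vec \theta)| \leq 1 - \frac{1}{10} g^{-k-2}$.
   Context: Let $g\ge 2$, $k\ge 2$ be integers, $\mathbb Z_g$ the integers mod $g$, and $d=\binom{k}{2}(g-1)$. Index the coordinates of $\mathbb R^d$ by pairs $(\{i,j\},a)$ with $1\le i<j\le k$ and $a\in\mathbb Z_g\setminus\{0\}$. Define $Z:(\mathbb Z_g)^k\to\mathbb R^d$ by $[Z(\vec x)]_{\{i,j\},a}=1-1/g$ if $x_i-x_j=a$ and $-1/g$ otherwise. Define $\Phi(\vec\theta)=\sum_{\vec x\in(\mathbb Z_g)^k} g^{-k}e^{i\vec\theta\cdot Z(\vec x)}$, $\Lambda=\{\vec\theta\in\mathbb R^d: |\Phi(\vec\theta)|=1\}$, $\Lambda_0=\Lambda\cap[-\pi,\pi)^d$. For $\vec\theta\in[-\pi,\pi)^d$ and $\delta>0$ let $B_\delta(\vec\theta)=\{\vec\mu\in[-\pi,\pi)^d: \vec\mu\equiv\vec\theta+\vec\zeta \pmod{2\pi}$ componentwise, for some $\vec\zeta$ with $|\zeta_{\{i,j\},a}|<\delta$ for all coordinates$\}$. Let $L=\{\vec\theta\in[-\pi,\pi)^d: \theta_{\{i,j\},a}\equiv 0 \pmod{2\pi/g}$ for all coordinates$\}$ and $R_\delta^A=\bigcup_{\vec\eta\in L\setminus\Lambda_0}B_\delta(\vec\eta)$. *)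

(* Defs.v *)
From Stdlib Require Import Reals ZArith.
From mathcomp Require Import all_boot all_algebra.
From mathcomp Require Import Rstruct.

Set Implicit Arguments.
Unset Strict Implicit.
Unset Printing Implicit Defensive.

Open Scope R_scope.

(* Coordinates of R^d, d = C(k,2)(g-1): pairs ({i,j}, a) with i < j
   (0-based indices in 'I_k) and a in Z_g \ {0} (a : 'I_g, a <> 0). *)
Definition Coord (g k : nat) : Type :=
  {p : ('I_k * 'I_k) * 'I_g | ((p.1.1 < p.1.2)%N && (nat_of_ord p.2 != 0%N))}.

Definition vecZg (g k : nat) : finType := {ffun 'I_k -> 'I_g}.

(* x_i - x_j = a in Z_g *)
Definition diff_is (g k : nat) (x : vecZg g k) (c : Coord g k) : bool :=
  let: ((i, j), a) := sval c in
  ((x i + (g - x j)) %% g == nat_of_ord a)%N.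

Definition Zvec (g k : nat) (x : vecZg g k) (c : Coord g k) : R :=
  if diff_is x c then (1 - / INR g) else (- / INR g).

Definition dotZ (g k : nat) (theta : Coord g k -> R) (x : vecZg g k) : R :=
  \big[Rplus/0]_(c : Coord g k) (theta c * Zvec x c).

(* Real and imaginary parts of Phi(theta) = sum_x g^{-k} e^{i theta.Z(x)} *)
Definition RePhi (g k : nat) (theta : Coord g k -> R) : R :=
  \big[Rplus/0]_(x : vecZg g k) (/ (INR g ^ k) * cos (dotZ theta x)).
Definition ImPhi (g k : nat) (theta : Coord g k -> R) : R :=
  \big[Rplus/0]_(x : vecZg g k) (/ (INR g ^ k) * sin (dotZ theta x)).

Definition absPhi (g k : nat) (theta : Coord g k -> R) : R :=
  sqrt (RePhi theta ^ 2 + ImPhi theta ^ 2).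

Definition inLambda (g k : nat) (theta : Coord g k -> R) : Prop :=
  absPhi theta = 1.

Definition inBox (g k : nat) (theta : Coord g k -> R) : Prop :=
  forall c, - PI <= theta c < PI.

Definition inLambda0 (g k : nat) (theta : Coord g k -> R) : Prop :=
  inLambda theta /\ inBox theta.

Definition inL (g k : nat) (theta : Coord g k -> R) : Prop :=
  inBox theta /\
  forall c, exists m : Z, theta c = IZR m * (2 * PI / INR g).

Definition inB (g k : nat) (delta : R) (eta mu : Coord g k -> R) : Prop :=
  inBox mu /\
  exists zeta : Coord g k -> R,
    (forall c, Rabs (zeta c) < delta) /\
    (forall c, exists m : Z, mu c = eta c + zeta c + 2 * PI * IZR m).

Definition inRA (g k : nat) (delta : R) (theta : Coord g k -> R) : Prop :=
  exists eta : Coord g k -> R,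
    inL eta /\ ~ inLambda0 eta /\ inB delta eta theta.

(* Main.v *)
Require Import Defs.
From Stdlib Require Import Reals ZArith Lra Lia Classical.
Open Scope R_scope.

Lemma sin_approx1 a : sin_approx a 1 = a - a^3/6.
Proof. unfold sin_approx, sin_term. simpl sum_f_R0. simpl Factorial.fact. simpl INR. simpl pow. field. Qed.
Lemma sin_approx2 a : sin_approx a 2 = a - a^3/6 + a^5/120.
Proof. unfold sin_approx, sin_term. simpl sum_f_R0. simpl Factorial.fact. simpl INR. field. Qed.

Lemma sin_le_id x : 0 <= x -> sin x <= x.
Proof.
intros hx. destruct (Rle_lt_dec x 4) as [h4|h4].
- destruct (pre_sin_bound x 0 hx h4) as [_ h]. simpl (2*(0+1))%nat in h.
  rewrite sin_approx2 in h. assert (x^3/6 >= x^5/120).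
  { assert (h3: 0 <= x^3) by (apply pow_le; lra). assert (x*x <= 16) by nra.
    replace (x^5) with (x^3*(x*x)) by ring. nra. } lra.
- pose proof (SIN_bound x). lra.
Qed.

Lemma abs_sin_le x : Rabs (sin x) <= Rabs x.
Proof.
destruct (Rle_lt_dec 0 x) as [h|h].
- rewrite (Rabs_right x) by lra. pose proof (sin_le_id x h).
  pose proof (sin_le_id (-x)). rewrite sin_neg in H0.
  destruct (Rle_lt_dec 0 (sin x)).
  + rewrite Rabs_right; lra.
  + rewrite Rabs_left by lra.
    destruct (Rle_lt_dec x PI).
    * pose proof (sin_ge_0 x h r0). lra.
    * pose proof (SIN_bound x). pose proof PI2_1. lra.
- rewrite (Rabs_left x) by lra. pose proof (sin_le_id (-x)). rewrite sin_neg in H.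
  destruct (Rle_lt_dec 0 (sin x)).
  + rewrite Rabs_right by lra.
    destruct (Rle_lt_dec (-x) PI).
    * pose proof (sin_ge_0 (-x)). rewrite sin_neg in H0. assert (sin x <= 0) by (apply Ropp_le_cancel; rewrite Ropp_0; apply H0; lra). lra.
    * pose proof (SIN_bound x). pose proof PI2_1. lra.
  + rewrite Rabs_left by lra. lra.
Qed.

Lemma cos_pert p e : cos (p + e) <= cos p + 2 * Rabs e.
Proof.
rewrite cos_plus.
assert (h1 : 1 - cos e <= Rabs e).
{ replace e with (2 * (e/2)) at 1 by field. rewrite cos_2a_sin.
  pose proof (abs_sin_le (e/2)). pose proof (SIN_bound (e/2)).
  assert (Rabs (e/2) = Rabs e / 2) by (unfold Rdiv; rewrite Rabs_mult, Rabs_inv, (Rabs_right 2) by lra; reflexivity).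
  assert (sin (e/2) * sin (e/2) <= Rabs (sin (e/2))).
  { rewrite <- (Rabs_right (sin (e/2) * sin (e/2))) by nra. rewrite Rabs_mult.
    pose proof (Rabs_pos (sin (e/2))). assert (Rabs (sin (e/2)) <= 1) by (apply Rabs_le; lra). nra. }
  lra. }
pose proof (abs_sin_le e). pose proof (COS_bound p). pose proof (SIN_bound p). pose proof (COS_bound e).
assert (- sin p * sin e <= Rabs e).
{ assert (Rabs (sin p * sin e) <= Rabs e).
  { rewrite Rabs_mult. assert (Rabs (sin p) <= 1) by (apply Rabs_le; lra). pose proof (Rabs_pos (sin e)). pose proof (Rabs_pos (sin p)). nra. }
  pose proof (Rle_abs (- (sin p * sin e))). rewrite Rabs_Ropp in H4. lra. }
assert (cos p * cos e - cos p <= 1 - cos e) by nra.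
lra.
Qed.

Lemma cos_periodZ x z : cos (x + 2 * PI * IZR z) = cos x.
Proof.
destruct (Z_le_gt_dec 0 z) as [h|h].
- rewrite <- (Z2Nat.id z h). rewrite <- INR_IZR_INZ.
  replace (2 * PI * INR (Z.to_nat z)) with (2 * INR (Z.to_nat z) * PI) by ring. apply cos_period.
- set (n := Z.to_nat (-z)). assert (hz : z = (- Z.of_nat n)%Z) by (unfold n; lia).
  rewrite hz, opp_IZR, <- INR_IZR_INZ.
  rewrite <- (cos_period (x + 2 * PI * - INR n) n). f_equal. ring.
Qed.
Lemma sin_sq_bound (G a : R) : (G = 2 \/ 3 <= G) -> PI/G <= a <= PI/2 ->
  19/10 / (G*G) <= sin a * sin a.
Proof.
intros hG ha. pose proof PI2_1. pose proof PI_4.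
destruct hG as [hG|hG].
- subst G. assert (a = PI/2) by lra. subst a. rewrite sin_PI2. lra.
- set (b := PI / G) in *.
  assert (hb0 : 2 / G < b) by (unfold b; unfold Rdiv; apply Rmult_lt_compat_r; [apply Rinv_0_lt_compat; lra| lra]).
  assert (hb1 : b <= 4/3).
  { unfold b. unfold Rdiv. assert (/G <= /3) by (apply Rinv_le_contravar; lra).
    assert (0 < /G) by (apply Rinv_0_lt_compat; lra).
    assert (PI * /G <= 4 * /G) by (apply Rmult_le_compat_r; lra). lra. }
  assert (h2G : 0 < 2 / G) by (unfold Rdiv; apply Rmult_lt_0_compat; [lra| apply Rinv_0_lt_compat; lra]).
  assert (hsb : b - b^3/6 <= sin b).
  { assert (0 <= b) by lra. assert (b <= PI) by lra. destruct (sin_bound b 0) as [h _]; try assumption. simpl (2*0+1)%nat in h. rewrite sin_approx1 in h. exact h. }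
  assert (hsa : sin b <= sin a) by (apply sin_incr_1; lra).
  assert (hbb : b - b^3/6 >= b * (19/27)).
  { assert (b*b <= 16/9) by nra. replace (b^3) with (b*(b*b)) by ring. nra. }
  assert (hs : 38/27 / G <= sin a).
  { assert (38/27/G = (2/G) * (19/27)) by (field; lra). lra. }
  assert (19/10/(G*G) <= (38/27/G) * (38/27/G)).
  { replace (38/27/G*(38/27/G)) with ((38/27)*(38/27)/(G*G)) by (field; lra).
    unfold Rdiv. apply Rmult_le_compat_r; [apply Rlt_le, Rinv_0_lt_compat; nra| lra]. }
  assert (0 <= 38/27/G) by (unfold Rdiv; apply Rmult_le_pos; [lra| apply Rlt_le, Rinv_0_lt_compat; lra]).
  nra.
Qed.

Lemma cos_int_bound (g : nat) (z : Z) : (2 <= g)%nat -> (z mod Z.of_nat g <> 0)%Z ->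
  cos (2*PI/INR g * IZR z) <= 1 - 2*(19/10/(INR g * INR g)).
Proof.
intros hg hz. set (gz := Z.of_nat g) in *.
assert (hgz : (2 <= gz)%Z) by (unfold gz; lia).
assert (hG : INR g = IZR gz) by (unfold gz; apply INR_IZR_INZ).
assert (hG2 : INR g = 2 \/ 3 <= INR g).
{ destruct (Nat.eq_dec g 2) as [->|h]; [left; simpl; lra| right]. replace 3 with (INR 3) by (simpl; lra). apply le_INR. lia. }
assert (hGp : 2 <= INR g) by lra.
set (r := (z mod gz)%Z) in *. set (q := (z / gz)%Z).
assert (hzq : z = (gz * q + r)%Z) by (unfold q, r; apply Z.div_mod; lia).
assert (hr : (0 <= r < gz)%Z) by (unfold r; apply Z.mod_pos_bound; lia).
assert (hr1 : (1 <= r <= gz - 1)%Z) by lia.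
assert (e1 : 2*PI/INR g * IZR z = 2 * (PI * IZR r / INR g) + 2 * PI * IZR q).
{ rewrite hzq, plus_IZR, mult_IZR, <- hG. field. lra. }
rewrite e1, cos_periodZ, cos_2a_sin.
assert (Hr1 : 1 <= IZR r) by (apply IZR_le; lia).
assert (Hr2 : IZR r <= INR g - 1) by (rewrite hG, <- minus_IZR; apply IZR_le; lia).
pose proof PI2_1.
assert (key : 19/10/(INR g * INR g) <= sin (PI * IZR r / INR g) * sin (PI * IZR r / INR g)).
{ destruct (Z_le_gt_dec (2*r) gz) as [h|h].
  - apply sin_sq_bound; auto.
    assert (H2 : 2 * IZR r <= INR g) by (rewrite hG, <- mult_IZR; apply IZR_le; lia).
    split.
    + unfold Rdiv. apply Rmult_le_compat_r; [apply Rlt_le, Rinv_0_lt_compat; lra| nra].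
    + apply (Rmult_le_reg_r (INR g)); [lra|]. unfold Rdiv. rewrite Rmult_assoc, Rinv_l by lra. nra.
  - replace (PI * IZR r / INR g) with (PI - PI * (INR g - IZR r) / INR g) by (field; lra).
    rewrite sin_PI_x. apply sin_sq_bound; auto.
    assert (H2 : 2 * IZR r >= INR g + 1) by (rewrite hG; apply Rle_ge; rewrite <- mult_IZR, <- plus_IZR; apply IZR_le; lia).
    split.
    + unfold Rdiv. apply Rmult_le_compat_r; [apply Rlt_le, Rinv_0_lt_compat; lra| nra].
    + apply (Rmult_le_reg_r (INR g)); [lra|]. unfold Rdiv. rewrite Rmult_assoc, Rinv_l by lra. nra. }
lra.
Qed.

Lemma cos_int_mult (g : nat) (q : Z) : (2 <= g)%nat -> cos (2*PI/INR g * (IZR q * INR g)) = 1.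
Proof.
intros hg. assert (0 < INR g) by (apply lt_0_INR; lia).
replace (2*PI/INR g * (IZR q * INR g)) with (0 + 2 * PI * IZR q) by (field; lra).
rewrite cos_periodZ. apply cos_0.
Qed.

From mathcomp Require Import all_boot all_algebra.
From mathcomp Require Import Rstruct.
Open Scope R_scope.

Lemma sq_formula (T : finType) (w : R) (F : T -> R) :
 (\big[Rplus/0]_x (w * cos (F x)))^2 + (\big[Rplus/0]_x (w * sin (F x)))^2
 = \big[Rplus/0]_x \big[Rplus/0]_y (w*w*cos(F x - F y)).
Proof.
rewrite /pow !Rmult_1_r !big_distrl -big_split /=.
apply: eq_bigr => x _; rewrite !big_distrr -big_split /=.
apply: eq_bigr => y _; rewrite cos_minus; ring.
Qed.

Lemma sum_const_R (T : finType) (c : R) : \big[Rplus/0]_(x : T) c = INR #|T| * c.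
Proof.
rewrite big_const. elim: #|T| => [|n IH]; first by rewrite /=; ring. rewrite iterS.
rewrite IH. rewrite S_INR. ring.
Qed.

Lemma sum_le (T : finType) (F G : T -> R) : (forall x, F x <= G x) ->
  \big[Rplus/0]_x F x <= \big[Rplus/0]_x G x.
Proof.
move=> h. apply: (big_ind2 (fun a b => a <= b)) => //; first lra.
move=> a b c d ? ?; lra.
Qed.

Lemma sum_abs_le (T : finType) (F G : T -> R) : (forall x, Rabs (F x) <= G x) ->
  Rabs (\big[Rplus/0]_x F x) <= \big[Rplus/0]_x G x.
Proof.
move=> h. apply: (big_ind2 (fun a b => Rabs a <= b)) => //.
- rewrite Rabs_R0; lra.
- move=> a b c d ? ?. apply: Rle_trans (Rabs_triang _ _) _. lra.
Qed.

Definition isInt (r : R) := exists z : Z, r = IZR z.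

Lemma sum_int (T : finType) (F : T -> R) : (forall x, isInt (F x)) -> isInt (\big[Rplus/0]_x F x).
Proof.
move=> h. apply: (big_ind isInt) => //.
- by exists Z0.
- move=> a b [za ->] [zb ->]. exists (Z.add za zb). by rewrite plus_IZR.
Qed.

Lemma card_Coord g k : (#|{: Coord g k}| <= k * k * g)%N.
Proof.
have := @leq_card {: Coord g k} _ (@sval _ _) (@val_inj _ _ _).
by rewrite !card_prod !card_ord.
Qed.

Lemma INR_expn m n : INR (m ^ n)%N = INR m ^ n.
Proof. elim: n => [|n IH]; first by rewrite expn0. by rewrite expnS mult_INR IH. Qed.

Lemma card_vec g k : #|vecZg g k| = (g ^ k)%N.
Proof. by rewrite card_ffun !card_ord. Qed.

Lemma sum_sub (T : finType) (F G : T -> R) :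
  \big[Rplus/0]_x (F x - G x) = \big[Rplus/0]_x F x - \big[Rplus/0]_x G x.
Proof.
apply: (big_rec3 (fun a b c => c = a - b)); first ring.
move=> i a b c _ ->. ring.
Qed.

Lemma sum_ind1 (T : finType) (ys : T) (a : R) :
  \big[Rplus/0]_y (if y == ys then a else 0) = a.
Proof.
rewrite (bigD1 ys) //= eqxx big1 /=; first ring.
by move=> y /negbTE ->.
Qed.

Definition Ind {g k} (x : vecZg g k) (c : Coord g k) : R := if diff_is x c then 1 else 0.

Lemma dotZ_diff g k (th : Coord g k -> R) x y :
  dotZ th x - dotZ th y = \big[Rplus/0]_c (th c * (Ind x c - Ind y c)).
Proof.
rewrite /dotZ -sum_sub. apply: eq_bigr => c _.
rewrite /Zvec /Ind. case: (diff_is x c); case: (diff_is y c); ring.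
Qed.

Theorem lemma3p1 (g k : nat) (hg : (2 <= g)%N) (hk : (2 <= k)%N)
  (delta : R) (hd0 : (0 < delta)%R)
  (hd : (delta < 8 / 5 * / (INR g ^ (k + 3)) * / (INR k ^ 2))%R)
  (theta : Coord g k -> R) :
  inRA delta theta ->
  (absPhi theta <= 1 - / 10 * / (INR g ^ (k + 2)))%R.
Proof.
move/RltP: hd0 => hd0. move/RltP: hd => hd.
move=> [eta [[hbox hm] [hnl [hbt [zeta [hz hM]]]]]].
apply/RleP.
have e8 : ((8%:R)%R : R) = 8 by rewrite -INRE /=; lra.
have e5 : ((5%:R)%R : R) = 5 by rewrite -INRE /=; lra.
have {}hd : delta < 8/5 * / (INR g ^ (k+3)) * / (INR k ^2) by move: hd; rewrite e8 e5.
change (absPhi theta <= 1 - / 10 * / (INR g ^ (k + 2))).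
change (0 < delta) in hd0.
have hG2 : 2 <= INR g by (have := le_INR 2 g (elimT leP hg); simpl; lra).
have hG0 : 0 < INR g by lra.
set G := INR g in hG2 hG0 hd hm *.
set om := 2 * PI / G.
have hPI := PI_RGT_0.
have hom : 0 < om by rewrite /om; apply: Rdiv_lt_0_compat; lra.
set s := fun c => eta c / om.
set t := fun c => (theta c - eta c - zeta c) / (2 * PI).
have hs : forall c, isInt (s c).
{ move=> c; case: (hm c) => m hmc; exists m; rewrite /s hmc /om; field; lra. }
have ht : forall c, isInt (t c).
{ move=> c; case: (hM c) => m hmc; exists m; rewrite /t hmc; field; lra. }
set S' := fun x => \big[Rplus/0]_c (s c * Ind x c).
set T' := fun x => \big[Rplus/0]_c (t c * Ind x c).
have hIndInt : forall (a : R) (x : vecZg g k) (c : Coord g k), isInt a -> isInt (a * Ind x c).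
{ move=> a x c [z ->]; rewrite /Ind; case: (diff_is x c).
  - by exists z; rewrite Rmult_1_r.
  - by exists Z0; rewrite Rmult_0_r. }
have hSi : forall x, isInt (S' x) by move=> x; apply: sum_int => c; apply: hIndInt.
have hTi : forall x, isInt (T' x) by move=> x; apply: sum_int => c; apply: hIndInt.
set E' := fun x => \big[Rplus/0]_c (zeta c * Ind x c).
have hdec : forall x y, dotZ theta x - dotZ theta y
   = om * (S' x - S' y) + (E' x - E' y) + 2 * PI * (T' x - T' y).
{ move=> x y. rewrite dotZ_diff /S' /T' /E' -!sum_sub !big_distrr -!big_split.
  apply: eq_bigr => c _ /=. rewrite /s /t. field. split; lra. }
have hdecE : forall x y, dotZ eta x - dotZ eta y = om * (S' x - S' y).
{ move=> x y. rewrite dotZ_diff /S' -!sum_sub !big_distrr.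
  apply: eq_bigr => c _ /=. rewrite /s. field. lra. }
set D := INR (k * k * g) * delta.
have hEb : forall x y, Rabs (E' x - E' y) <= D.
{ move=> x y. rewrite /E' -sum_sub.
  apply: Rle_trans (@sum_abs_le _ _ (fun _ => delta) _) _.
  - move=> c. rewrite -Rmult_minus_distr_l Rabs_mult.
    have h1 : Rabs (Ind x c - Ind y c) <= 1.
    { rewrite /Ind; case: (diff_is x c); case: (diff_is y c);
        rewrite ?Rminus_diag ?Rabs_R0; try lra.
      - rewrite Rminus_0_r Rabs_R1; lra.
      - rewrite Rminus_0_l Rabs_Ropp Rabs_R1; lra. }
    have := hz c. have := Rabs_pos (zeta c). have := Rabs_pos (Ind x c - Ind y c). nra.
  - rewrite sum_const_R /D. apply: Rmult_le_compat_r; first lra.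
    apply: le_INR. apply/leP. exact: card_Coord. }
have hg' : (2 <= g)%coq_nat by apply/leP.
set P := G ^ k.
have hP : 0 < P by apply: pow_lt.
have hN : INR #|vecZg g k| = P by rewrite card_vec INR_expn.
set w := / P.
have hw : 0 < w by apply: Rinv_0_lt_compat.
have hNw : P * w = 1 by rewrite /w; field; lra.
set gm := fun r => exists q : Z, r = IZR q * G.
set C0 := 1 - 2 * (19 / 10 / (G * G)).
have hcos_nongm : forall r, isInt r -> ~ gm r -> cos (om * r) <= C0.
{ move=> r [z ->] hng. rewrite /om /C0 /G.
  case: (Z.eq_dec (z mod Z.of_nat g) 0) => hz0.
  - exfalso; apply: hng. exists (Z.div z (Z.of_nat g)).
    have hzq : z = Z.mul (Z.of_nat g) (Z.div z (Z.of_nat g)).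
    { have := Z.div_mod z (Z.of_nat g). rewrite hz0 Z.add_0_r. apply. lia. }
    rewrite {1}hzq mult_IZR -INR_IZR_INZ /G; ring.
  - exact: cos_int_bound. }
have hcos_gm : forall r, gm r -> cos (om * r) = 1.
{ move=> r [q ->]. rewrite /om /G. exact: cos_int_mult. }
have hex : exists x0 y0, ~ gm (S' x0 - S' y0).
{ apply: NNPP => hne. apply: hnl. split; last exact: hbox.
  rewrite /inLambda /absPhi /RePhi /ImPhi sq_formula.
  transitivity (sqrt 1); last exact: sqrt_1. f_equal.
  rewrite (eq_bigr (fun _ => \big[Rplus/0]_(y : vecZg g k) (w * w))).
  - rewrite sum_const_R sum_const_R hN. rewrite /w; field; lra.
  - move=> x _. apply: eq_bigr => y _. rewrite hdecE hcos_gm ?Rmult_1_r //.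
    apply: NNPP => h; apply: hne; by exists x, y. }
case: hex => x0 [y0 hxy].
have hdiffInt : forall x y, isInt (S' x - S' y).
{ move=> x y. case: (hSi x) => a ->. case: (hSi y) => b ->. exists (Z.sub a b). by rewrite minus_IZR. }
have hys : forall x, exists ys, cos (om * (S' x - S' ys)) <= C0.
{ move=> x. case: (classic (gm (S' x - S' x0))) => h1.
  - exists y0. apply: hcos_nongm; first exact: hdiffInt. move=> h2; apply: hxy.
    case: h1 => q1 h1. case: h2 => q2 h2. exists (Z.sub q2 q1). rewrite minus_IZR.
    have -> : S' x0 - S' y0 = (S' x - S' y0) - (S' x - S' x0) by ring.
    rewrite h1 h2; ring.
  - exists x0. by apply: hcos_nongm; first exact: hdiffInt. }
have hterm : forall x y, cos (dotZ theta x - dotZ theta y) <= cos (om * (S' x - S' y)) + 2 * D.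
{ move=> x y. rewrite hdec. case: (hTi x) => a ->. case: (hTi y) => b ->.
  rewrite -minus_IZR cos_periodZ. have := cos_pert (om * (S' x - S' y)) (E' x - E' y).
  have := hEb x y. lra. }
have hterm1 : forall x y, cos (om * (S' x - S' y)) <= 1 by move=> x y; have := COS_bound (om * (S' x - S' y)); lra.
have inner : forall x, \big[Rplus/0]_(y : vecZg g k) (w * w * cos (dotZ theta x - dotZ theta y))
   <= P * (w * w * (1 + 2 * D)) - w * w * (1 - C0).
{ move=> x. case: (hys x) => ys hys'.
  apply: Rle_trans (@sum_le _ _ (fun y => w * w * (1 + 2 * D) - (if y == ys then w * w * (1 - C0) else 0)) _) _.
  - move=> y. have hww : 0 < w * w by nra. have := hterm x y. have := hterm1 x y.
    case: eqP => [->|_] h1 h2.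
    + have := hterm ys ys. nra.
    + nra.
  - rewrite sum_sub sum_const_R sum_ind1 hN. lra. }
have hX : RePhi theta ^ 2 + ImPhi theta ^ 2 <= 1 + 2 * D - w * (1 - C0).
{ rewrite /RePhi /ImPhi sq_formula.
  apply: Rle_trans (@sum_le _ _ (fun _ => P * (w * w * (1 + 2 * D)) - w * w * (1 - C0)) inner) _.
  rewrite sum_const_R hN. have -> : P * (P * (w * w * (1 + 2 * D)) - w * w * (1 - C0))
    = (P * w) * (P * w) * (1 + 2 * D) - (P * w) * w * (1 - C0) by ring.
  rewrite hNw. lra. }
have hP1 : 1 <= P by apply: pow_R1_Rle; lra.
have hGk2 : G ^ (k + 2) = P * G * G by rewrite pow_add /P /=; ring.
have hGk3 : G ^ (k + 3) = P * G * G * G by rewrite pow_add /P /=; ring.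
rewrite hGk2. rewrite hGk3 in hd.
set u := / (P * G * G).
have hu : 0 < u by rewrite /u; apply: Rinv_0_lt_compat; nra.
have hu1 : u <= 1.
{ rewrite /u. rewrite -Rinv_1. apply: Rinv_le_contravar; [lra| nra]. }
have hK : 0 < INR k by apply: lt_0_INR; move/leP: hk; lia.
have hD : D < 8 / 5 * u.
{ rewrite /D !mult_INR -/G.
  have := Rmult_lt_compat_r (INR k * INR k * G) _ _ ltac:(nra) hd.
  have -> : 8 / 5 * / (P * G * G * G) * / INR k ^ 2 * (INR k * INR k * G) = 8 / 5 * u.
  { rewrite /u /=. field. repeat split; lra. }
  lra. }
have hwC : w * (1 - C0) = 19 / 5 * u by rewrite /w /C0 /u; field; lra.
rewrite hwC in hX.
have hX2 : RePhi theta ^ 2 + ImPhi theta ^ 2 <= (1 - / 10 * u) ^ 2.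
{ have -> : (1 - / 10 * u) ^ 2 = 1 - u / 5 + u * u / 100 by field.
  nra. }
rewrite /absPhi. rewrite -(sqrt_pow2 (1 - / 10 * u)); last lra.
exact: sqrt_le_1_alt.
Qed.
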